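(* Let $m\ge3$ and $\alpha\in[0,1]$. Every randomized social choice rule on $m$ candidates which, on every profile, places positive probability only on candidates $a$ whose integral domination graph $G(a)$ admits a perfect matching or which have $\mathrm{plu}(a)>0$, has distortion at least $2+\alpha-2/(m-2)$ on $\alpha$-decisive metric spaces.
   Context: An election: voters $V=\{1,\dots,n\}$, a fixed finite set $C$ of $m$ candidates, a profile $\sigma$ of linear orders over $C$; $a\succeq_i c$ means $a=c$ or $i$ ranks $a$ above $c$; $\mathrm{top}(i)$ is $i$'s first choice; $\mathrm{plu}(a)=|\{i:\mathrm{top}(i)=a\}|$. The integral domination graph $G(a)$ is the bipartite graph with both sides copies of $V$ and edge $(i,j)$ iff $a\succeq_i\mathrm{top}(j)$ (these are exactly the candidates that the rule \textsc{PluralityMatching} may return). A distance function $d$ on $V\cup C$ is nonnegative, symmetric and satisfies the triangle inequality (co-location allowed); consistent with $\sigma$ if $d(i,c)\le d(i,c')$ whenever $i$ ranks $c$ above $c'$; $\alpha$-decisive if $d(i,\mathrm{top}(i))\le\alpha\,d(i,c)$ for all $i$ and $c\ne\mathrm{top}(i)$. $\mathrm{SC}(c)=\sum_i d(i,c)$. The distortion of a randomized rule on $\alpha$-decisive spaces is $\sup_\sigma\sup_d\mathbb{E}[\mathrm{SC}(f(\sigma))]/\min_c\mathrm{SC}(c)$ over $\alpha$-decisive consistent $d$. *)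

(* Defs.v *)
From mathcomp Require Import all_boot all_order all_algebra.
From mathcomp Require Import fingroup perm reals.
Set Implicit Arguments. Unset Strict Implicit. Unset Printing Implicit Defensive.
Import Order.TTheory GRing.Theory Num.Theory.
Local Open Scope ring_scope.

(* A profile assigns to each voter i a permutation (sigma i) of 'I_m, where
   (sigma i c) is the rank position of candidate c in voter i's linear order
   (position 0 = first choice). *)
Definition profile (n m : nat) := {ffun 'I_n -> {perm 'I_m}}.

Definition ranks_above n m (s : profile n m) (i : 'I_n) (a c : 'I_m) : bool :=
  (s i a < s i c)%N.

Definition is_top n m (s : profile n m) (i : 'I_n) (c : 'I_m) : bool :=
  (nat_of_ord (s i c) == 0)%N.

Definition weakly_pref n m (s : profile n m) i (a c : 'I_m) : bool :=
  (a == c) || ranks_above s i a c.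

Definition plu n m (s : profile n m) (a : 'I_m) : nat :=
  #|[set i | is_top s i a]|.

Definition dom_edge n m (s : profile n m) (a : 'I_m) (i j : 'I_n) : bool :=
  [exists c, is_top s j c && weakly_pref s i a c].

(* G(a) (bipartite, both sides copies of V) admits a perfect matching *)
Definition has_perfect_matching n m (s : profile n m) (a : 'I_m) : Prop :=
  exists pi : {perm 'I_n}, forall i, dom_edge s a i (pi i).

Definition rand_rule (R : realType) (m : nat) :=
  forall n : nat, profile n m -> {ffun 'I_m -> R}.

Definition is_distribution (R : realType) m (p : {ffun 'I_m -> R}) : Prop :=
  (forall c, 0 <= p c) /\ \sum_(c < m) p c = 1.

(* Distance function on V ∪ C (co-location allowed). *)
Definition point n m := ('I_n + 'I_m)%type.

Definition is_distance (R : realType) n m (d : point n m -> point n m -> R)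
  : Prop :=
  [/\ forall x y, 0 <= d x y,
      forall x, d x x = 0,
      forall x y, d x y = d y x &
      forall x y z, d x z <= d x y + d y z].

Definition consistent (R : realType) n m (s : profile n m)
  (d : point n m -> point n m -> R) : Prop :=
  forall i c c', ranks_above s i c c' -> d (inl i) (inr c) <= d (inl i) (inr c').

Definition decisive (R : realType) n m (alpha : R) (s : profile n m)
  (d : point n m -> point n m -> R) : Prop :=
  forall i t c, is_top s i t -> c != t ->
    d (inl i) (inr t) <= alpha * d (inl i) (inr c).

Definition SC (R : realType) n m (d : point n m -> point n m -> R) (c : 'I_m) : R :=
  \sum_(i < n) d (inl i) (inr c).

Definition expected_SC (R : realType) n m (p : {ffun 'I_m -> R})
  (d : point n m -> point n m -> R) : R :=
  \sum_(c < m) p c * SC d c.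

Definition distortion_at_least (R : realType) m (f : rand_rule R m)
  (alpha L : R) : Prop :=
  forall r : R, r < L ->
    exists n (s : profile n m) (d : point n m -> point n m -> R),
      [/\ is_distance d, consistent s d, decisive alpha s d &
          exists c, (forall c', SC d c <= SC d c') /\
                    r * SC d c < expected_SC (f n s) d].

(* Main.v *)
Require Import Defs.
From mathcomp Require Import all_boot all_order all_algebra.
From mathcomp Require Import fingroup perm reals.
From mathcomp Require Import lra zify.
Import Order.TTheory GRing.Theory Num.Theory.
Local Open Scope ring_scope.

Inductive kind (R : Type) (m : nat) := KStar of 'I_m & R | KI | KE.
Arguments KI {R m}. Arguments KE {R m}. Arguments KStar {R m}.

Section Metric.
Variables (R : realType) (m : nat) (alpha : R).
Hypothesis a0 : 0 <= alpha.
Hypothesis a1 : alpha <= 1.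
Ltac ha := have ? := a0; have ? := a1.

Definition kdist (x y : kind R m) : R :=
 match x, y with
 | KStar b h, KStar b' h' => if b == b' then `|h - h'| else h + h'
 | KI, KI => 0 | KE, KE => 0
 | KI, KE => 2*alpha | KE, KI => 2*alpha
 | KI, KStar _ _ => 2 | KStar _ _, KI => 2
 | KE, KStar _ _ => 2*(1+alpha) | KStar _ _, KE => 2*(1+alpha)
 end.

Definition kwf (x : kind R m) : bool :=
  match x with KStar _ h => (0 <= h) && (h <= 1 + alpha) | _ => true end.

Lemma sd_bounds (b b' : 'I_m) (h h' : R) : 0 <= h -> h <= 1 + alpha -> 0 <= h' -> h' <= 1 + alpha ->
  let d := kdist (KStar b h) (KStar b' h') in
  [/\ 0 <= d, d <= h + h', h - h' <= d & h' - h <= d].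
Proof.
move=> h0 h1 h0' h1' /=; ha.
case: (b == b').
  have := ler_norm (h - h'); have := ler_norm (h' - h); rewrite distrC.
  have : `|h - h'| <= h + h'.
    by rewrite (le_trans (ler_normB _ _)) // !ger0_norm.
  by move=> *; split => //; lra.
split; lra.
Qed.

Lemma kdist_ge0 x y : kwf x -> kwf y -> 0 <= kdist x y.
Proof.
case: x => [b h||]; case: y => [b' h'||] /= wx wy.
all: have ? := a0; have ? := a1; try lra.
case/andP: wx => ? ?; case/andP: wy => ? ?.
have [] := @sd_bounds b b' h h' ltac:(assumption) ltac:(assumption) ltac:(assumption) ltac:(assumption).
by move=> H *; apply: H.
Qed.

Lemma kdist_xx x : kdist x x = 0.
Proof. by case: x => [b h||] //=; rewrite eqxx subrr normr0. Qed.

Lemma kdist_sym x y : kdist x y = kdist y x.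
Proof.
case: x => [b h||]; case: y => [b' h'||] //=.
rewrite [b' == b]eq_sym distrC [h' + h]addrC; by case: (b == b').
Qed.

Lemma star_tri bx hx by' hy bz hz : 0 <= hx -> 0 <= hy -> 0 <= hz ->
  kdist (KStar bx hx) (KStar bz hz) <= kdist (KStar bx hx) (KStar by' hy) + kdist (KStar by' hy) (KStar bz hz).
Proof.
move=> hx0 hy0 hz0 /=.
case: (eqVneq bx by') => [exy|nxy]; case: (eqVneq by' bz) => [eyz|nyz].
- by rewrite exy eyz eqxx ler_distD.
- rewrite exy ifN //; have := ler_norm (hx - hy); lra.
- rewrite -eyz ifN //; have := ler_norm (hz - hy); rewrite distrC; lra.
- case: eqVneq => _; last lra.
  by rewrite (le_trans (ler_normB _ _)) // !ger0_norm //; lra.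
Qed.

Lemma kdist_tri x y z : kwf x -> kwf y -> kwf z -> kdist x z <= kdist x y + kdist y z.
Proof.
case: x => [bx hx||]; case: y => [by' hy||]; case: z => [bz hz||];
 try (move=> /andP[? ?] /andP[? ?] /andP[? ?]; apply: star_tri; assumption).
all: ha; rewrite /= => wx wy wz;
 repeat match goal with H : is_true (andb _ _) |- _ => case/andP: H => ? ? end; try lra;
 repeat match goal with
 | |- context [ if ?b1 == ?b2 then `|?u - ?v| else _ ] =>
     let H := fresh in
     have H := @sd_bounds b1 b2 u v ltac:(assumption) ltac:(assumption) ltac:(assumption) ltac:(assumption);
     rewrite /= in H; move: H; move: (if b1 == b2 then _ else _) => ? [? ? ? ?]
 end; lra.
Qed.
End Metric.
Arguments kdist {R m}. Arguments kwf {R m}.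
Arguments kdist_ge0 {R m}. Arguments kdist_tri {R m}. Arguments kdist_sym {R m}. Arguments kdist_xx {R m}.

Lemma sum_mod (V : nmodType) k g (F : nat -> V) :
  \sum_(i < k * g) F (i %% k)%N = (\sum_(j < k) F j) *+ g.
Proof.
rewrite -(big_mkord xpredT (fun i => F (i %% k)%N)) -(big_mkord xpredT F).
elim: g => [|g IH]; first by rewrite muln0 big_geq // mulr0n.
rewrite mulnSr (@big_cat_nat _ _ _ (k * g)%N) ?leq_addr //= IH mulrSr; congr (_ + _).
rewrite -{1}(add0n (k * g)%N) big_addn addKn.
apply: eq_big_nat => i /andP[_ lt].
by rewrite addnC mulnC modnMDl modn_small.
Qed.

Section Constr.
Variables (R : realType) (p g : nat) (alpha : R).
Hypothesis a0 : 0 <= alpha.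
Hypothesis a1 : alpha <= 1.
Ltac ha := have ? := a0; have ? := a1.

Definition cst : 'I_(p.+3) := inord p.+1.
Definition tv (v : nat) : 'I_(p.+3) := inord (v %% p.+1)%N.

Definition sig (v : nat) : {perm 'I_(p.+3)} :=
  if v is v'.+1 then (tperm ord0 (tv v') * tperm (inord 1) cst)%g
  else (tperm cst ord_max * tperm ord0 cst)%g.

Definition NV := (p.+1 * g).+1%N.
Definition prof : profile NV p.+3 := [ffun i : 'I_NV => sig i].

Definition locV (v : nat) : kind R p.+3 :=
  if v is v'.+1 then KStar (tv v') 1 else KI.
Definition locC (c : 'I_(p.+3)) : kind R p.+3 :=
  if c == cst then KStar c 0 else if c == ord_max then KE else KStar c (1 + alpha).
Definition loc (x : point NV p.+3) :=
  match x with inl i => locV i | inr c => locC c end.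
Definition dd (x y : point NV p.+3) : R := kdist alpha (loc x) (loc y).

Lemma val_cst : nat_of_ord cst = p.+1. Proof. by rewrite /cst inordK. Qed.
Lemma val_tv v : nat_of_ord (tv v) = (v %% p.+1)%N.
Proof. by rewrite /tv inordK // (ltn_trans (ltn_pmod _ _)). Qed.
Lemma tv_lt v : (nat_of_ord (tv v) < p.+1)%N.
Proof. by rewrite val_tv ltn_pmod. Qed.

Lemma tv_cst v : (tv v == cst) = false.
Proof. by apply/negbTE; rewrite -val_eqE /= val_cst neq_ltn tv_lt. Qed.
Lemma tv_max v : (tv v == ord_max) = false.
Proof. by apply/negbTE; rewrite -val_eqE /= neq_ltn (ltn_trans (tv_lt v)). Qed.
Lemma cst_max : (cst == ord_max) = false.
Proof. by apply/negbTE; rewrite -val_eqE /= val_cst neq_ltn ltnSn. Qed.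
Lemma o0_cst : ((ord0 : 'I_(p.+3)) == cst) = false.
Proof. by apply/negbTE; rewrite -val_eqE /= val_cst. Qed.
Lemma o0_max : ((ord0 : 'I_(p.+3)) == ord_max) = false.
Proof. by apply/negbTE; rewrite -val_eqE. Qed.
Lemma o1_max : ((inord 1 : 'I_(p.+3)) == ord_max) = false.
Proof. by apply/negbTE; rewrite -val_eqE /= inordK. Qed.

Lemma sig_top v : sig v.+1 (tv v) = ord0.
Proof.
rewrite /sig permM tpermR tpermD //; first by rewrite eq_sym -val_eqE /= inordK.
by rewrite eq_sym o0_cst.
Qed.
Lemma sig_cst v : nat_of_ord (sig v.+1 cst) = 1%N.
Proof.
rewrite /sig permM (@tpermD _ _ _ cst); last by rewrite tv_cst.
  by rewrite tpermR inordK.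
by rewrite o0_cst.
Qed.
Lemma sig_max v : sig v.+1 ord_max = ord_max.
Proof.
rewrite /sig permM tpermD ?o0_max ?tv_max // tpermD ?o1_max ?cst_max //.
all: by rewrite ?o0_max ?tv_max ?o1_max ?cst_max.
Qed.
Lemma sig0_max : sig 0 ord_max = ord0.
Proof. rewrite /sig /= permM. by rewrite tpermR tpermR. Qed.
Lemma sig0_cst : sig 0 cst = ord_max.
Proof. rewrite /sig /= permM tpermL tpermD //. all: by rewrite ?o0_max ?cst_max. Qed.

Lemma dV_eq v c : kdist alpha (locV v.+1) (locC c) =
  if c == tv v then alpha else if c == cst then 1
  else if c == ord_max then 2 * (1 + alpha) else 2 + alpha.
Proof.
rewrite /locV /locC; case: (eqVneq c (tv v)) => [E|ne].
  subst c.
  rewrite tv_cst tv_max /= eqxx opprD addrA subrr add0r normrN ger0_norm //.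
case: (eqVneq c cst) => [E|nc] /=; first by subst c; rewrite tv_cst addr0.
case: (eqVneq c ord_max) => [E|nm] //=.
rewrite eq_sym (negbTE ne); lra.
Qed.

Lemma d0_eq c : kdist alpha KI (locC c) = if c == ord_max then 2 * alpha else 2.
Proof.
rewrite /locC; case: (eqVneq c cst) => [E|nc] /=; first by subst c; rewrite cst_max.
by case: (eqVneq c ord_max).
Qed.

Lemma wf_loc x : kwf alpha (loc x).
Proof.
ha; case: x => [i|c] /=.
  case: (nat_of_ord i) => [|v] //=; apply/andP; split; lra.
rewrite /locC; case: (c == cst) => /=; first (apply/andP; split; lra).
case: (c == ord_max) => //=; apply/andP; split; lra.
Qed.

Lemma dd_dist : is_distance dd.
Proof.
split.
- move=> x y; exact: kdist_ge0 (wf_loc x) (wf_loc y).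
- move=> x; exact: kdist_xx.
- move=> x y; exact: kdist_sym.
- move=> x y z; exact: kdist_tri (wf_loc x) (wf_loc y) (wf_loc z).
Qed.

Lemma prof_sig (i : 'I_NV) : prof i = sig i.
Proof. by rewrite ffunE. Qed.

Lemma sig_inj v : injective (sig v).
Proof. exact: perm_inj. Qed.

Lemma cons : consistent prof dd.
Proof.
ha; move=> i c c'; rewrite /ranks_above /dd /= prof_sig.
case: (nat_of_ord i) => [|v] lt.
  rewrite !d0_eq; case: (eqVneq c' ord_max) => [E|nm].
    by subst c'; rewrite sig0_max ltn0 in lt.
  by case: ifP => _; lra.
rewrite !dV_eq; case: (eqVneq c (tv v)) => [_|nct].
  by repeat (case: ifP => _); lra.
have h1 : (0 < sig v.+1 c)%N.
  rewrite lt0n; apply/negP => /eqP h0; move/eqP: nct; apply.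
  by apply: (@sig_inj v.+1); rewrite sig_top; apply: val_inj.
have nc't : c' != tv v.
  apply/negP => /eqP E; subst c'; by rewrite sig_top ltn0 in lt.
have nc'c : c' != cst.
  apply/negP => /eqP E; subst c'; rewrite sig_cst in lt; by rewrite ltnNge h1 in lt.
have ncm : c != ord_max.
  apply/negP => /eqP E; subst c; rewrite sig_max /= in lt.
  by have := ltn_ord (sig v.+1 c'); rewrite ltnS leqNgt lt.
rewrite (negbTE nc't) (negbTE nc'c) (negbTE ncm).
by repeat (case: ifP => _); lra.
Qed.

Lemma decis : decisive alpha prof dd.
Proof.
ha; move=> i t c; rewrite /is_top /dd /= prof_sig.
case: (nat_of_ord i) => [|v] Ht nct.
  have E : t = ord_max.
    by apply: (@sig_inj 0); rewrite sig0_max; apply: val_inj; apply/eqP.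
  subst t; rewrite !d0_eq eqxx (negbTE nct); lra.
have E : t = tv v.
  by apply: (@sig_inj v.+1); rewrite sig_top; apply: val_inj; apply/eqP.
subst t; rewrite !dV_eq eqxx (negbTE nct).
by repeat (case: ifP => _); nra.
Qed.

Lemma not_top_cst (i : 'I_NV) : ~~ is_top prof i cst.
Proof.
rewrite /is_top prof_sig; case: (nat_of_ord i) => [|v].
  by rewrite sig0_cst.
by rewrite sig_cst.
Qed.

Lemma no_match : ~ has_perfect_matching prof cst.
Proof.
move=> [pi Hpi]; have := Hpi ord0; rewrite /dom_edge.
move/existsP => [c /andP [Ht Hw]].
case/orP: Hw => [/eqP E | H].
  by subst c; rewrite (negbTE (not_top_cst _)) in Ht.
rewrite /ranks_above prof_sig /= sig0_cst /= in H.
by have := ltn_ord (sig 0 c); rewrite ltnS leqNgt H.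
Qed.

Lemma plu_cst : plu prof cst = 0%N.
Proof.
apply/eqP; rewrite cards_eq0; apply/eqP/setP => i.
by rewrite inE in_set0 (negbTE (not_top_cst i)).
Qed.

Lemma SC_eq c : SC dd c = kdist alpha KI (locC c) +
   (\sum_(j < p.+1) kdist alpha (KStar (inord j) 1) (locC c)) *+ g.
Proof.
rewrite /SC big_ord_recl /=; congr (_ + _).
rewrite -(@sum_mod _ p.+1 g (fun j => kdist alpha (KStar (inord j) 1) (locC c))).
by apply: eq_bigr => i _; rewrite /dd /= add0n.
Qed.

End Constr.

Section T.
Variables (R : realType) (p g : nat) (alpha : R).
Hypothesis a0 : 0 <= alpha.
Hypothesis a1 : alpha <= 1.
Lemma SC_cst : SC (dd R p g alpha) (cst p) = 2 + (p.+1)%:R * g%:R.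
Proof.
rewrite SC_eq d0_eq cst_max /locC eqxx.
have -> : \sum_(j < p.+1) kdist alpha (KStar (inord j) 1) (KStar (cst p) 0) = (p.+1)%:R.
  transitivity (\sum_(j < p.+1) (1:R)); last by rewrite sumr_const card_ord.
  apply: eq_bigr => j _ /=.
  by case: ifP => _; rewrite ?subr0 ?normr1 ?addr0.
by rewrite mulr_natr.
Qed.
Lemma SC_max : SC (dd R p g alpha) ord_max = 2 * alpha + 2 * (1 + alpha) * ((p.+1)%:R * g%:R).
Proof.
rewrite SC_eq d0_eq eqxx /locC eq_sym cst_max eqxx.
by rewrite sumr_const card_ord -mulrnA -(mulr_natr (2 * (1 + alpha))) natrM mulrA.
Qed.
Lemma SC_top (c : 'I_p.+3) : c != cst p -> c != ord_max ->
  SC (dd R p g alpha) c = 2 + ((2 + alpha) * (p.+1)%:R - 2) * g%:R.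
Proof.
move=> nc nm.
have hc : (c < p.+1)%N.
  have nc' : nat_of_ord c != p.+1.
    by apply: contra nc => /eqP E; apply/eqP/val_inj; rewrite /= E val_cst.
  have nm' : nat_of_ord c != p.+2.
    by apply: contra nm => /eqP E; apply/eqP/val_inj.
  have := ltn_ord c; lia.
rewrite SC_eq d0_eq (negbTE nm) /locC (negbTE nc) (negbTE nm) .
set F := fun j : 'I_p.+1 => kdist alpha (KStar (inord j) 1) (KStar c (1 + alpha)).
have H2 : \sum_(j < p.+1) ((2 + alpha) - F j) = 2.
  rewrite (bigD1 (Ordinal hc)) //= big1 ?addr0.
    rewrite /F /= ifT; last by rewrite -val_eqE /= inordK.
    rewrite opprD addrA subrr add0r normrN ger0_norm //; lra.
  move=> j nj; rewrite /F /= ifF; first lra.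
  apply/negP; rewrite -val_eqE /= inordK; last by apply: (ltn_trans (ltn_ord j)).
  by move=> E; move/negP: nj; apply; rewrite -val_eqE /=.
rewrite sumrB sumr_const card_ord in H2.
have HS : \sum_(j < p.+1) kdist alpha (KStar (inord j) 1) (KStar c (1 + alpha)) = (2 + alpha) *+ p.+1 - 2.
  move: H2; rewrite /F; lra.
by rewrite HS (mulr_natr (2 + alpha)) -(mulr_natr ((2 + alpha) *+ p.+1 - 2) g).
Qed.

End T.

Lemma sum_pos_strict (R : realType) (m : nat) (P X : 'I_m -> R) (c1 : 'I_m) :
  (forall c, 0 <= P c) -> \sum_c P c = 1 -> P c1 = 0 ->
  (forall c, c != c1 -> 0 < X c) -> 0 < \sum_c P c * X c.
Proof.
move=> P0 P1 Pc1 HX.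
case: (pickP (fun c => 0 < P c)) => [c0 Hc0|Hn]; last first.
  have : \sum_c P c = 0.
    by apply: big1 => c _; apply/eqP; rewrite eq_le P0 andbT leNgt Hn.
  by rewrite P1 => /eqP; rewrite oner_eq0.
have nc0 : c0 != c1 by apply/negP => /eqP E; move: Hc0; rewrite E Pc1 ltxx.
rewrite (bigD1 c0) //=; apply: ltr_pwDl; first by rewrite mulr_gt0 // HX.
apply: sumr_ge0 => c _; case: (eqVneq c c1) => [->|nc]; first by rewrite Pc1 mul0r.
by rewrite mulr_ge0 // ltW // HX.
Qed.

Theorem theorem6 (R : realType) (m : nat) (alpha : R) (f : rand_rule R m) :
  (3 <= m)%N -> 0 <= alpha <= 1 ->
  (forall n (s : profile n m), is_distribution (f n s)) ->
  (forall n (s : profile n m) (a : 'I_m), 0 < f n s a ->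
      has_perfect_matching s a \/ (0 < plu s a)%N) ->
  distortion_at_least f alpha (2 + alpha - 2 / (m - 2)%:R).
Proof.
move=> m3 /andP[a0 a1] Hdist Hsupp r Hr.
have [p Hm] : exists p, m = p.+3 by exists (m - 3)%N; lia.
subst m.
have Hk : ((p.+3 - 2)%N = p.+1) by [].
rewrite Hk in Hr.
set K : R := (p.+1)%:R in Hr.
set L : R := 2 + alpha - 2 / K in Hr.
have K1 : 1 <= K by rewrite /K ler1n.
have KL : K * L = (2 + alpha) * K - 2.
  rewrite /L mulrBr mulrCA divff ?mulr1 ?mulrDl; last by rewrite /K pnatr_eq0.
  lra.
have Lr : 0 < L - r by lra.
set x : R := 2 * `|r - 1| / (L - r).
have x0 : 0 <= x by rewrite /x divr_ge0 // ?mulr_ge0 // ltW.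
set g := (Num.Def.archi_bound x).+1.
have Hg : x < g%:R.
  apply: (lt_le_trans (archi_boundP x0)); by rewrite ler_nat.
have G1 : 1 <= (g%:R : R) by rewrite ler1n.
have key : 2 * (r - 1) < g%:R * (L - r).
  have : x * (L - r) < g%:R * (L - r) by rewrite ltr_pM2r.
  rewrite /x mulrVK ?unitfE ?gt_eqF //.
  have := ler_norm (r - 1); lra.
exists (NV p g), (prof p g), (dd R p g alpha); split.
- exact: dd_dist.
- exact: cons.
- exact: decis.
set d := dd R p g alpha.
have SCc : SC d (cst p) = 2 + K * g%:R := SC_cst R p g alpha.
have SCm : SC d ord_max = 2 * alpha + 2 * (1 + alpha) * (K * g%:R) := SC_max R p g alpha.
have SCt : forall c, c != cst p -> c != ord_max -> SC d c = 2 + ((2 + alpha) * K - 2) * g%:R.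
  by move=> c nc nm; rewrite /d SC_top.
have KG : 1 <= K * g%:R by nra.
have SCpos : forall c, 0 < SC d c.
  move=> c; case: (eqVneq c (cst p)) => [->|nc]; first by rewrite SCc; lra.
  case: (eqVneq c ord_max) => [->|nm]; first by rewrite SCm; nra.
  rewrite SCt //; nra.
case: (@arg_minP _ R _ (cst p) xpredT (SC d) isT) => cm _ Hmin.
exists cm; split; first by move=> c'; apply: Hmin.
have [P0 P1] := Hdist (NV p g) (prof p g).
set P := f (NV p g) (prof p g) in P0 P1 *.
have Pc : P (cst p) = 0.
  apply/eqP; rewrite eq_le P0 andbT leNgt; apply/negP => pos.
  case: (Hsupp _ _ _ pos) => [/no_match //|]; by rewrite plu_cst.
have claim : forall c, c != cst p -> r * SC d cm < SC d c.
  move=> c nc.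
  case: (ltP r 1) => r1.
    have := Hmin c isT; have := SCpos cm; nra.
  have H1 : r * SC d cm <= r * SC d (cst p) by rewrite ler_pM2l ?Hmin //; lra.
  apply: (le_lt_trans H1); rewrite SCc.
  have hm : 2 + K * L * g%:R <= SC d c -> r * (2 + K * g%:R) < SC d c.
    move=> h; apply: lt_le_trans h.
    have h2 : g%:R * (L - r) <= K * (g%:R * (L - r)) by rewrite ler_peMl // mulr_ge0 // ?ltW //; lra.
    nra.
  apply: hm; rewrite KL.
  case: (eqVneq c ord_max) => [->|nm]; first by rewrite SCm; nra.
  by rewrite SCt.
have := @sum_pos_strict R p.+3 P (fun c => SC d c - r * SC d cm) (cst p) P0 P1 Pc.
have HX : forall c, c != cst p -> 0 < SC d c - r * SC d cm.
  by move=> c nc; rewrite subr_gt0 claim.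
move/(_ HX) => H.
rewrite /expected_SC.
have -> : \sum_(c < p.+3) P c * SC d c = \sum_c P c * (SC d c - r * SC d cm) + r * SC d cm.
  rewrite -[X in _ = _ + X]mul1r -P1 mulr_suml -big_split /=.
  by apply: eq_bigr => c _; rewrite mulrBr subrK.
lra.
Qed.
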